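(* Let $v$ be a simple game on $N=\{1,\dots,n\}$ and $i\in N$ a player with $\mathrm{Nuc}_i(v)<1$. Then $\mathrm{Nuc}_i(v)\le\frac12$.
   Context: A simple game on $N$ is a surjective, monotone map $v\colon 2^N\to\{0,1\}$. For $x\in\mathbb{R}^n$ and $S\subseteq N$ let $x(S)=\sum_{j\in S}x_j$ and the excess $e(S,x)=v(S)-x(S)$. Let $E(x)\in\mathbb{R}^{2^n}$ be the vector of all excesses $e(S,x)$, $S\subseteq N$, sorted in weakly decreasing order. $x$ is lexicographically smaller than $y$ if $E_k(x)<E_k(y)$ for the smallest $k$ with $E_k(x)\ne E_k(y)$. The nucleolus $\mathrm{Nuc}(v)$ is the unique lexicographically minimal vector $x$ among all $x\in\mathbb{R}^n$ with $x(N)\le 1$; for simple games it satisfies $\mathrm{Nuc}(v)\in\mathbb{R}^n_{\ge0}$ and $\sum_j\mathrm{Nuc}_j(v)=1$. *)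

(* Defs.v *)
From HB Require Import structures.
From mathcomp Require Import all_boot all_order all_algebra.
Set Implicit Arguments. Unset Strict Implicit. Unset Printing Implicit Defensive.
Import Order.TTheory GRing.Theory Num.Theory.
Local Open Scope ring_scope.

Definition simple_game (n : nat) (v : {set 'I_n} -> bool) : Prop :=
  (forall S T : {set 'I_n}, S \subset T -> v S -> v T) /\
  (exists S, v S = false) /\ (exists S, v S = true).

Definition coal_val (R : realFieldType) (n : nat) (x : 'I_n -> R) (S : {set 'I_n}) : R :=
  \sum_(j in S) x j.

Definition excess (R : realFieldType) (n : nat) (v : {set 'I_n} -> bool)
  (x : 'I_n -> R) (S : {set 'I_n}) : R :=
  (v S : nat)%:R - coal_val x S.

Definition excess_vec (R : realFieldType) (n : nat) (v : {set 'I_n} -> bool)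
  (x : 'I_n -> R) : seq R :=
  sort (fun a b : R => b <= a) [seq excess v x C | C <- enum {set 'I_n}].

Fixpoint lex_lt (R : realFieldType) (s t : seq R) : bool :=
  match s, t with
  | a :: s', b :: t' => (a < b) || ((a == b) && lex_lt s' t')
  | _, _ => false
  end.

Definition is_nucleolus (R : realFieldType) (n : nat) (v : {set 'I_n} -> bool)
  (x : 'I_n -> R) : Prop :=
  coal_val x setT <= 1 /\
  forall y : 'I_n -> R, coal_val y setT <= 1 -> ~~ lex_lt (excess_vec v y) (excess_vec v x).

(* Main.v *)
Require Import Defs.
From HB Require Import structures.
From mathcomp Require Import all_boot all_order all_algebra.
From mathcomp Require Import zify lra.
Import Order.TTheory GRing.Theory Num.Theory.
Local Open Scope ring_scope.

Lemma count_lt_aux (T : eqType) (a b : pred T) (s : seq T) t0 :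
  subpred a b -> t0 \in s -> b t0 -> ~~ a t0 -> (count a s < count b s)%N.
Proof.
move=> Hsub; elim: s => //= t s IH; rewrite in_cons => /orP [/eqP <- | Hin] Hb Ha.
  by rewrite (negbTE Ha) Hb add0n add1n ltnS sub_count.
have H := IH Hin Hb Ha.
case Hat: (a t); first by rewrite (Hsub _ Hat) ltn_add2l.
case: (b t) => /=; lia.
Qed.

Section Aux.
Variable R : realFieldType.
Local Notation geR := (fun a b : R => b <= a).

Lemma geR_trans : transitive geR.
Proof. move=> p q r /= h1 h2; exact: le_trans h2 h1. Qed.

Lemma lex_count (A B : seq R) (u : R) :
  sorted geR A -> sorted geR B -> size A = size B ->
  (count (fun z => (u <= z)%R) A < count (fun z => (u <= z)%R) B)%N ->
  (forall w, u <= w -> (count (fun z => (w <= z)%R) A <= count (fun z => (w <= z)%R) B)%N) ->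
  lex_lt A B.
Proof.
elim: A B => [|a A IH] [|b B] //=.
move=> sA sB [eAB] Hu Hw.
have allB : all (geR b) B := order_path_min geR_trans sB.
have cnt0 : forall c, b < c -> ((c <= b)%R + count (fun z => (c <= z)%R) B)%N = 0%N.
  move=> c hbc; rewrite (lt_geF hbc) add0n.
  rewrite (eq_in_count (a2 := pred0)) ?count_pred0 // => z /(allP allB) hz /=.
  apply/negbTE; rewrite -ltNge; exact: le_lt_trans hz hbc.
case: (ltgtP a b) => hab //=.
- have [hua|hau] := leP u a.
    have := Hw a hua; rewrite cnt0 // /= lexx; lia.
  by move: Hu; rewrite cnt0 //; apply: lt_trans hau.
- subst b; apply: IH.
  + exact: path_sorted sA.
  + exact: path_sorted sB.
  + by [].
  + by rewrite ltn_add2l in Hu.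
  + by move=> w hw; have := Hw w hw; rewrite leq_add2l.
Qed.

Lemma lexD (T : eqType) (s : seq T) (f g : T -> R) u t0 :
  (forall t, u <= f t -> f t <= g t) -> t0 \in s -> u <= g t0 -> f t0 < u ->
  lex_lt (sort geR [seq f t | t <- s]) (sort geR [seq g t | t <- s]).
Proof.
move=> H Ht0 Hg Hf.
have tot : total geR by move=> p q; rewrite le_total.
have pS : forall r, perm_eq (sort geR r) r by move=> r; rewrite perm_sort.
apply: (@lex_count _ _ u).
- exact: sort_sorted.
- exact: sort_sorted.
- by rewrite !size_sort !size_map.
- rewrite !(permP (pS _)) !count_map.
  apply: (@count_lt_aux _ _ _ _ t0) => //=.
    by move=> t /= hu; exact: le_trans hu (H _ hu).
  by rewrite -ltNge.
- move=> w hw; rewrite !(permP (pS _)) !count_map; apply: sub_count => t /= hwt.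
  exact: le_trans hwt (H _ (le_trans hw hwt)).
Qed.

Lemma exists_max (T : eqType) (f : T -> R) (s : seq T) t0 : t0 \in s ->
  exists2 t, t \in s & forall z, z \in s -> f z <= f t.
Proof.
elim: s t0 => //= a s IH t0; rewrite in_cons => _.
case: s IH => [|b s] IH.
  by exists a; rewrite ?mem_head // => z; rewrite in_cons orbF => /eqP ->.
have [t ht Ht] := IH b (mem_head _ _).
have [hat|hta] := leP (f a) (f t).
  exists t; first by rewrite in_cons ht orbT.
  by move=> z; rewrite in_cons => /orP [/eqP ->|/Ht].
exists a; first exact: mem_head.
move=> z; rewrite in_cons => /orP [/eqP ->|/Ht hz] //.
exact: le_trans hz (ltW hta).
Qed.
End Aux.

Definition shift (R : realFieldType) n (x : 'I_n -> R) (j : 'I_n) (c : R) : 'I_n -> R :=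
  fun l => x l + (if l == j then c else 0).
Arguments shift {R n}.

Lemma coal_shift (R : realFieldType) n (x : 'I_n -> R) j c S :
  coal_val (shift x j c) S = coal_val x S + (if j \in S then c else 0).
Proof.
rewrite /coal_val /shift big_split /=; congr (_ + _).
case: (boolP (j \in S)) => Hj.
  rewrite (bigD1 j) //= eqxx big1 ?addr0 // => l /andP [_ /negbTE ->] //.
rewrite big1 // => l Hl; case: eqP => // El; subst l; by rewrite Hl in Hj.
Qed.

Lemma excessE (R : realFieldType) n (v : {set 'I_n} -> bool) (x : 'I_n -> R) S :
  excess v x S = (if v S then 1 else 0) - coal_val x S.
Proof. by rewrite /excess; case: (v S). Qed.
Arguments excessE {R n}.

Lemma excess_shift (R : realFieldType) n (v : {set 'I_n} -> bool) (x : 'I_n -> R) j c S :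
  excess v (shift x j c) S = excess v x S - (if j \in S then c else 0).
Proof. by rewrite /excess coal_shift opprD addrA. Qed.

Theorem theorem5 (R : realFieldType) (n : nat) (v : {set 'I_n} -> bool)
  (x : 'I_n -> R) (i : 'I_n) :
  simple_game v -> is_nucleolus v x -> x i < 1 -> x i <= 1 / 2.
Proof.
move=> [Hmono [[S1 HS1] [S2 HS2]]] [HxN Hmin] Hi1.
have v0 : v set0 = false.
  by apply/negP => h; have := Hmono _ _ (sub0set S1) h; rewrite HS1.
have vT : v setT by apply: Hmono (subsetT S2) HS2.
have improve : forall y u S0, coal_val y setT <= 1 ->
    (forall S, u <= excess v y S -> excess v y S <= excess v x S) ->
    u <= excess v x S0 -> excess v y S0 < u -> False.
  move=> y u S0 Hy H H1 H2; move/negP: (Hmin y Hy); apply.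
  by apply: (@lexD _ _ _ _ _ u S0 H _ H1 H2); rewrite mem_enum.
have HN1 : coal_val x setT = 1.
  apply/eqP; rewrite eq_le HxN /= leNgt; apply/negP => hlt.
  pose c := 1 - coal_val x setT.
  apply: (improve (shift x i c) (excess v x setT) setT).
  - rewrite coal_shift in_setT /c; lra.
  - move=> S _; rewrite excess_shift /c; case: (i \in S); lra.
  - by [].
  - rewrite excess_shift in_setT /c; lra.
have Hnn : forall j, 0 <= x j.
  move=> j; rewrite leNgt; apply/negP => hj.
  have [S' _ Hmax] := @exists_max R _ (excess v x) (enum {set 'I_n}) set0 (etrans (mem_enum _ _) isT).
  have Hmax' : forall T, excess v x T <= excess v x S' by move=> T; apply: Hmax; rewrite mem_enum.
  have addj : forall T : {set 'I_n}, j \notin T -> excess v x T - x j <= excess v x (j |: T).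
    move=> T hT; rewrite !excessE /coal_val big_setU1 //=.
    have := Hmono T (j |: T) (subsetUr _ _).
    case: (v T); case: (v (j |: T)); move=> h; try lra; by have := h isT.
  have jS : j \in S'.
    apply/negPn/negP => hjn; have := addj _ hjn; have := Hmax' (j |: S'); lra.
  have [k hk] : exists k, k \notin S'.
    case: (set_0Vmem (~: S')) => [h|[k hk]]; last by exists k; rewrite inE in hk.
    have ST : S' = setT by rewrite -[S']setCK h setC0.
    have := Hmax' [set j]; rewrite ST !excessE vT HN1 /coal_val big_set1.
    case: (v [set j]); lra.
  pose d := - x j / 2.
  apply: (improve (shift (shift x j d) k (-d)) (excess v x S') S').
  - rewrite !coal_shift !in_setT /d; lra.
  - move=> S; rewrite !excess_shift /d.
    case hjS: (j \in S); case hkS: (k \in S) => /=; move=> h; try lra.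
    have := addj S (negbT hjS); have := Hmax' (j |: S); lra.
  - by [].
  - rewrite !excess_shift jS (negbTE hk) /= /d; lra.
have ge_one : forall (S : {set 'I_n}) l, l \in S -> x l <= coal_val x S.
  move=> S l hl; rewrite /coal_val (bigD1 l) //= lerDl.
  by apply: sumr_ge0 => m _; apply: Hnn.
have ge0 : forall S, 0 <= coal_val x S by move=> S; apply: sumr_ge0 => m _; apply: Hnn.
have exle : forall S, excess v x S <= 1 - coal_val x S.
  by move=> S; rewrite excessE; case: (v S); lra.
have sumN : forall W : {set 'I_n}, coal_val x setT = coal_val x W + coal_val x (~: W).
  by move=> W; rewrite /coal_val (big_setID W) /= setTI setTD.
have set1v : forall l, coal_val x [set l] = x l by move=> l; rewrite /coal_val big_set1.
rewrite leNgt; apply/negP => Ha.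
case: (boolP [exists W, v W && (i \notin W)]) => [/existsP [W /andP [vW iW]] | /existsPn Hveto].
  case: (set_0Vmem W) => [W0|[k kW]]; first by rewrite W0 v0 in vW.
  have eW : 1/2 < excess v x W.
    rewrite excessE vW; have := sumN W; have := ge_one (~: W) i; rewrite inE iW => /(_ isT).
    lra.
  pose d := x i - 1/2.
  apply: (improve (shift (shift x i (-d)) k d) (excess v x W) W).
  - rewrite !coal_shift !in_setT /d; lra.
  - move=> S; rewrite !excess_shift /d.
    case hiS: (i \in S); case hkS: (k \in S) => /=; move=> h; try lra;
      have := exle S; have := ge_one S i hiS; lra.
  - by [].
  - rewrite !excess_shift (negbTE iW) kW /= /d; lra.
have lose : forall S : {set 'I_n}, i \notin S -> v S = false.
  by move=> S hS; apply/negP => hv; have := Hveto S; rewrite hv hS.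
have sumi : coal_val x setT = x i + coal_val x (~: [set i]) by rewrite (sumN [set i]) set1v.
have [j /andP [ji xj]] : exists j, (j != i) && (0 < x j).
  case: (boolP [exists j, (j != i) && (0 < x j)]) => [/existsP //|/existsPn H].
  have : coal_val x (~: [set i]) <= 0.
    rewrite /coal_val; apply: sumr_le0 => l; rewrite !inE => hl.
    by have := H l; rewrite hl /= -leNgt.
  lra.
have jC : j \in ~: [set i] by rewrite !inE.
have iCj : i \in ~: [set j] by rewrite !inE eq_sym.
case hvj: (v (~: [set j])).
  pose d := x j.
  apply: (improve (shift (shift x i d) j (-d)) (x j) (~: [set j])).
  - rewrite !coal_shift !in_setT /d; lra.
  - move=> S; rewrite !excess_shift /d.
    case hiS: (i \in S); case hjS: (j \in S) => /=; move=> h; try lra.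
    have E := excessE v x S; rewrite (lose S (negbT hiS)) in E.
    have := ge_one S j hjS; lra.
  - rewrite excessE hvj; have := sumN [set j]; rewrite set1v; lra.
  - rewrite !excess_shift iCj !inE eqxx /= excessE hvj /d.
    have := sumN [set j]; rewrite set1v; lra.
have vetoj : forall S : {set 'I_n}, j \notin S -> v S = false.
  move=> S hS; apply/negP => hv.
  have sub : S \subset ~: [set j].
    by apply/subsetP => l hl; rewrite !inE; apply/eqP => e; subst l; rewrite hl in hS.
  by have := Hmono _ _ sub hv; rewrite hvj.
have hij : x i <= x j.
  rewrite leNgt; apply/negP => hij.
  pose d := (x i - x j) / 2.
  apply: (improve (shift (shift x i (-d)) j d) (- x j) [set j]).
  - rewrite !coal_shift !in_setT /d; lra.
  - move=> S; rewrite !excess_shift /d.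
    case hiS: (i \in S); case hjS: (j \in S) => /=; move=> h; try lra.
    have E := excessE v x S; rewrite (vetoj S (negbT hjS)) in E.
    have := ge_one S i hiS; lra.
  - rewrite excessE lose ?set1v; first lra.
    by rewrite inE eq_sym.
  - rewrite !excess_shift !inE eq_sym (negbTE ji) eqxx /= excessE lose ?set1v /d; first lra.
    by rewrite inE eq_sym.
have := ge_one _ _ jC; lra.
Qed.
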